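(* As $\alpha$ ranges over all edge weight systems $\alpha\in\mathcal W(\tau_\lambda;\mathbb Z)$, the elements $Z_\alpha=[Z_1^{\alpha_1}Z_2^{\alpha_2}\cdots Z_n^{\alpha_n}]$ form a basis of the complex vector space $\mathcal Z^\omega(\lambda)$.
   Context: $S$ is a closed oriented surface $\bar S$ of genus $g$ minus $s\ge1$ points $v_1,\dots,v_s$, with $2-2g-s<0$; $\lambda$ is an ideal triangulation (a triangulation of $\bar S$ with vertex set exactly $\{v_1,\dots,v_s\}$) with edges $\lambda_1,\dots,\lambda_n$, $n=6g+3s-6$. Let $a_{ij}\in\{0,1,2\}$ be the number of times an end of $\lambda_j$ immediately succeeds an end of $\lambda_i$ when going counterclockwise around a puncture, $\sigma_{ij}=a_{ij}-a_{ji}$. For $\omega\in\mathbb C-\{0\}$, $\mathcal T^\omega(\lambda)$ is the algebra with generators $Z_i^{\pm1}$ and relations $Z_iZ_j=\omega^{2\sigma_{ij}}Z_jZ_i$. Weyl ordering: $[Z_{i_1}^{n_1}\cdots Z_{i_l}^{n_l}]=\omega^{-\sum_{u<v}n_un_v\sigma_{i_ui_v}}Z_{i_1}^{n_1}\cdots Z_{i_l}^{n_l}$. A monomial $Z_1^{k_1}\cdots Z_n^{k_n}$ is balanced if for every face of $\lambda$ with sides $\lambda_{i_1},\lambda_{i_2},\lambda_{i_3}$ the sum $k_{i_1}+k_{i_2}+k_{i_3}$ is even; the balanced Chekhov–Fock algebra $\mathcal Z^\omega(\lambda)$ is the subalgebra of $\mathcal T^\omega(\lambda)$ generated by balanced monomials.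 Train track $\tau_\lambda$: in each face of $\lambda$, $\tau_\lambda$ consists of three arcs, each joining two sides of the face and turning around the corner between them; these arcs meet each edge $\lambda_i$ at a single switch, so that $\tau_\lambda$ has one switch per edge of $\lambda$ and three edges per face. $\mathcal W(\tau_\lambda;\mathbb Z)$ is the group of assignments of an integer to each edge of $\tau_\lambda$ such that at each switch the sum of the weights of edges incoming on one side equals the sum on the other side. For $\alpha\in\mathcal W(\tau_\lambda;\mathbb Z)$, $\alpha_i$ denotes the sum of the weights of the edges of $\tau_\lambda$ on one side of the switch on $\lambda_i$, and $Z_\alpha=[Z_1^{\alpha_1}\cdots Z_n^{\alpha_n}]$. *)

(* Defs.v *)
From HB Require Import structures.
From mathcomp Require Import all_boot all_order all_algebra.
From mathcomp Require Import finmap.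
From mathcomp.multinomials Require Import monalg.
From mathcomp Require Import Rstruct.
From mathcomp.real_closed Require Import complex.

Set Implicit Arguments.
Unset Strict Implicit.
Unset Printing Implicit Defensive.

Import GRing.Theory.
Local Open Scope ring_scope.

Definition CC := complex Rdefinitions.R.

(** An ideal triangulation [lambda] with [n] edges and [F] faces is encoded by
  [side : 'I_F -> 'I_3 -> 'I_n]: [side f k] is the edge of [lambda] forming the
  k-th side of face [f], the sides of each face being listed in
  counterclockwise order (for the orientation of the surface).  The surface
  [S] is obtained by gluing the faces along equally-labelled sides
  (orientation-reversingly) and deleting the vertices. *)

Section Triangulation.
Variables (n F : nat) (side : 'I_F -> 'I_3 -> 'I_n).

Definition two_sided : Prop :=
  forall i : 'I_n, #|[set p : 'I_F * 'I_3 | side p.1 p.2 == i]| = 2.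

Definition face_adj : rel 'I_F :=
  fun f g => [exists k, exists k', side f k == side g k'].

Definition tri_connected : Prop := forall f g : 'I_F, connect face_adj f g.

(** [a_ij]: number of corners where, going counterclockwise around the
  puncture, an end of [lambda_j] immediately succeeds an end of [lambda_i].
  In face [f], at the corner between sides [k] and [k+1], going
  counterclockwise around the vertex, side [k] succeeds side [k+1]. *)
Definition a_coef (i j : 'I_n) : nat :=
  #|[set p : 'I_F * 'I_3 | (side p.1 (ordS p.2) == i) && (side p.1 p.2 == j)]|.

Definition sigma (i j : 'I_n) : int := (a_coef i j)%:Z - (a_coef j i)%:Z.

Definition balanced (k : 'rV[int]_n) : Prop :=
  forall f : 'I_F,
    (2 %| k ord0 (side f (inord 0)) + k ord0 (side f (inord 1))
          + k ord0 (side f (inord 2)))%Z.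

(** * The train track tau_lambda
  Its edges are the corners of the faces: the edge [(f,k)] lies in face [f]
  and joins side [k] to side [k+1] (= [ordS k]).  The edges of tau_lambda
  arriving at the switch on side [k] of face [f] are the corner arcs
  [(f,k)] and [(f, k-1)]. *)
Definition side_weight (w : {ffun 'I_F * 'I_3 -> int}) (f : 'I_F) (k : 'I_3)
  : int := w (f, k) + w (f, ord_pred k).

Definition is_weight_system (w : {ffun 'I_F * 'I_3 -> int}) : Prop :=
  forall (f f' : 'I_F) (k k' : 'I_3),
    side f k = side f' k' -> side_weight w f k = side_weight w f' k'.

(** [alpha_i]: the total weight on one side of the switch on [lambda_i] *)
Definition edge_weight (w : {ffun 'I_F * 'I_3 -> int}) (i : 'I_n) : int :=
  oapp (fun p : 'I_F * 'I_3 => side_weight w p.1 p.2) 0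
       [pick p : 'I_F * 'I_3 | side p.1 p.2 == i].

Definition weight_vector (w : {ffun 'I_F * 'I_3 -> int}) : 'rV[int]_n :=
  \row_i edge_weight w i.

End Triangulation.

(** * The Chekhov-Fock algebra T^omega(lambda)
  Modelled as the quantum torus: the complex vector space with basis the
  symbols [e_k], k in Z^n, and the product
  [e_k * e_l = omega^(sum_(i,j) k_i l_j sigma_ij) e_(k+l)];
  the generator [Z_i] is [e_(delta_i)] and [Z_i^-1 = e_(-delta_i)]. *)

Section QuantumTorus.
Variables (n : nat) (sig : 'I_n -> 'I_n -> int) (omega : CC).

Definition QT := {malg CC['rV[int]_n]}.

Definition bform (k l : 'rV[int]_n) : int :=
  \sum_(i < n) \sum_(j < n) k ord0 i * l ord0 j * sig i j.

Definition emono (k : 'rV[int]_n) : QT := << k >>.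

Definition tmul (x y : QT) : QT :=
  \sum_(k <- msupp x) \sum_(l <- msupp y)
     << (x@_k * y@_l * omega ^ (bform k l)) *g (k + l) >>.

Definition tone : QT := emono 0.

Definition Zgen (i : 'I_n) : QT := emono (delta_mx 0 i).
Definition Zgen_inv (i : 'I_n) : QT := emono (- delta_mx 0 i).

Definition tpow (x : QT) (p : nat) : QT := iter p (tmul x) tone.

Definition Zpow (i : 'I_n) (m : int) : QT :=
  match m with
  | Posz p => tpow (Zgen i) p
  | Negz p => tpow (Zgen_inv i) p.+1
  end.

Definition monomial (k : 'rV[int]_n) : QT :=
  \big[tmul/tone]_(i < n) Zpow i (k ord0 i).

Definition weyl (k : 'rV[int]_n) : QT :=
  omega ^ (- \sum_(u < n) \sum_(v < n | (u < v)%N) k ord0 u * k ord0 v * sig u v)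
    *: monomial k.

Inductive gen_subalg (P : 'rV[int]_n -> Prop) : QT -> Prop :=
  | gen_mono k : P k -> gen_subalg P (monomial k)
  | gen_one : gen_subalg P tone
  | gen_add x y : gen_subalg P x -> gen_subalg P y -> gen_subalg P (x + y)
  | gen_scale (c : CC) x : gen_subalg P x -> gen_subalg P (c *: x)
  | gen_mul x y : gen_subalg P x -> gen_subalg P y -> gen_subalg P (tmul x y).

End QuantumTorus.

Definition balanced_CF (n F : nat) (side : 'I_F -> 'I_3 -> 'I_n) (omega : CC)
  : QT n -> Prop :=
  gen_subalg (sigma side) omega (balanced side).

Definition Z_alpha (n F : nat) (side : 'I_F -> 'I_3 -> 'I_n) (omega : CC)
  (w : {ffun 'I_F * 'I_3 -> int}) : QT n :=
  weyl (sigma side) omega (weight_vector side w).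

(* Main.v *)
Require Import Defs.
From HB Require Import structures.
From mathcomp Require Import all_boot all_order all_algebra.
From mathcomp Require Import finmap.
From mathcomp.multinomials Require Import monalg.
From mathcomp Require Import Rstruct.
From mathcomp.real_closed Require Import complex.
Import GRing.Theory.
Local Open Scope ring_scope.
From Stdlib Require Import Classical.
From mathcomp Require Import ring.

Lemma scaleUg (K : choiceType) (G : nzRingType) (c : G) (k : K) :
  c *: (<< k >> : {malg G[K]}) = << c *g k >>.
Proof.
apply/malgP => m; rewrite mcoeffZ !mcoeffU.
by case: eqP => _; [rewrite mulr1n mulr1 | rewrite !mulr0n mulr0].
Qed.

Set Implicit Arguments.
Unset Strict Implicit.
Section QT.
Variables (n : nat) (sig : 'I_n -> 'I_n -> int) (omega : CC).
Hypothesis Homega : omega != 0.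

Definition isMono (x : QT n) (k : 'rV[int]_n) := exists c : CC, c != 0 /\ x = << c *g k >>.

Lemma scaleU (c : CC) (k : 'rV[int]_n) : c *: (<< k >> : QT n) = << c *g k >>.
Proof. exact: scaleUg. Qed.

Lemma tmulU (c d : CC) (k l : 'rV[int]_n) : c != 0 -> d != 0 ->
  tmul sig omega << c *g k >> << d *g l >> = << c * d * omega ^ (bform sig k l) *g (k + l) >>.
Proof.
move=> c0 d0; rewrite /tmul !msuppU (negbTE c0) (negbTE d0) !big_seq_fset1.
by rewrite !mcoeffUU.
Qed.

Lemma isMono_tmul x y k l : isMono x k -> isMono y l -> isMono (tmul sig omega x y) (k + l).
Proof.
move=> [c [c0 ->]] [d [d0 ->]]; exists (c * d * omega ^ (bform sig k l)); split.
  by rewrite !mulf_neq0 // expfz_neq0.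
exact: tmulU.
Qed.

Lemma isMono_tone : isMono (tone n) 0.
Proof. by exists 1; split; rewrite ?oner_neq0. Qed.

Lemma isMono_tpow x k p : isMono x k -> isMono (tpow sig omega x p) (k *+ p).
Proof.
move=> hx; elim: p => [|p IH] /=; first by rewrite mulr0n; exact: isMono_tone.
by rewrite mulrS; apply: isMono_tmul.
Qed.

Lemma isMono_Zpow i m : isMono (Zpow sig omega i m) (m *: delta_mx 0 i).
Proof.
case: m => p; rewrite /Zpow.
  have -> : (Posz p) *: (delta_mx 0 i : 'rV[int]_n) = delta_mx 0 i *+ p.
    by rewrite -[Posz p]natz scaler_nat.
  by apply: isMono_tpow; exists 1; split; rewrite ?oner_neq0.
have -> : (Negz p) *: (delta_mx 0 i : 'rV[int]_n) = (- delta_mx 0 i) *+ p.+1.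
  by rewrite NegzE scaleNr -[Posz _]natz scaler_nat mulNrn.
by apply: isMono_tpow; exists 1; split; rewrite ?oner_neq0.
Qed.

Lemma isMono_monomial k : isMono (monomial sig omega k) k.
Proof.
rewrite /monomial.
have H : isMono (\big[tmul sig omega/tone n]_(i < n) Zpow sig omega i (k ord0 i))
                (\sum_(i < n) k ord0 i *: delta_mx 0 i).
  apply: (big_ind2 (fun x e => isMono x e)); first exact: isMono_tone.
    by move=> x1 x2 y1 y2; apply: isMono_tmul.
  by move=> i _; apply: isMono_Zpow.
by rewrite -row_sum_delta in H.
Qed.

Lemma isMono_coef x k : isMono x k -> x@_k != 0 /\ x = x@_k *: << k >>.
Proof. by move=> [c [c0 ->]]; rewrite mcoeffUU scaleU. Qed.

Definition wc (k : 'rV[int]_n) : CC := (weyl sig omega k)@_k.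

Lemma weylE k : wc k != 0 /\ weyl sig omega k = wc k *: << k >>.
Proof.
apply: isMono_coef; have [c [c0 E]] := isMono_monomial k.
rewrite /weyl E -scaleU scalerA scaleU; eexists; split; last reflexivity.
by rewrite mulf_neq0 // expfz_neq0.
Qed.
End QT.

Section Bal.
Variables (n F : nat) (side : 'I_F -> 'I_3 -> 'I_n) (omega : CC).
Hypothesis Homega : omega != 0.

Lemma bal0 : balanced side 0.
Proof. by move=> f; rewrite !mxE !add0r. Qed.

Lemma balD k l : balanced side k -> balanced side l -> balanced side (k + l).
Proof.
move=> hk hl f; rewrite !mxE.
have -> : k ord0 (side f (inord 0)) + l ord0 (side f (inord 0)) +
    (k ord0 (side f (inord 1)) + l ord0 (side f (inord 1))) +
    (k ord0 (side f (inord 2)) + l ord0 (side f (inord 2))) =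
    (k ord0 (side f (inord 0)) + k ord0 (side f (inord 1)) + k ord0 (side f (inord 2))) +
    (l ord0 (side f (inord 0)) + l ord0 (side f (inord 1)) + l ord0 (side f (inord 2))).
  by rewrite !addrA; congr (_ + _); rewrite -!addrA; congr (_ + _);
     rewrite addrC -!addrA; congr (_ + _); rewrite addrC -!addrA; congr (_ + _); rewrite addrC.
exact: rpredD.
Qed.

Definition Bal (x : QT n) := forall m, ~ balanced side m -> x@_m = 0.

Lemma gen_Bal x : balanced_CF side omega x -> Bal x.
Proof.
elim => {x}.
- move=> k hk m hm; have [c0 E] := isMono_coef (isMono_monomial (sigma side) Homega k).
  rewrite E mcoeffZ mcoeffU; case: eqP => [e|]; last by rewrite mulr0n mulr0.
  by subst; case: hm.
- move=> m hm; rewrite /tone /emono mcoeffU; case: eqP => [e|//]; subst.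
  by case: hm; exact: bal0.
- by move=> x y _ hx _ hy m hm; rewrite mcoeffD hx // hy // addr0.
- by move=> c x _ hx m hm; rewrite mcoeffZ hx // mulr0.
- move=> x y _ hx _ hy m hm; rewrite /tmul raddf_sum big1 // => k _.
  rewrite raddf_sum big1 // => l _; rewrite /= mcoeffU.
  case: (classic (balanced side k)) => bk; last by rewrite hx // !mul0r mul0rn.
  case: (classic (balanced side l)) => bl; last by rewrite hy // mulr0 mul0r mul0rn.
  case: eqP => [e|]; last by rewrite mulr0n.
  by case: hm; rewrite -e; apply: balD.
Qed.
End Bal.

Lemma S0 : ordS (inord 0 : 'I_3) = inord 1. Proof. by apply/val_inj; rewrite /= !inordK. Qed.
Lemma S1 : ordS (inord 1 : 'I_3) = inord 2. Proof. by apply/val_inj; rewrite /= !inordK. Qed.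
Lemma S2 : ordS (inord 2 : 'I_3) = inord 0. Proof. by apply/val_inj; rewrite /= !inordK. Qed.
Lemma P0 : ord_pred (inord 0 : 'I_3) = inord 2. Proof. by apply/val_inj; rewrite /= !inordK. Qed.
Lemma P1 : ord_pred (inord 1 : 'I_3) = inord 0. Proof. by apply/val_inj; rewrite /= !inordK. Qed.
Lemma P2 : ord_pred (inord 2 : 'I_3) = inord 1. Proof. by apply/val_inj; rewrite /= !inordK. Qed.
Lemma ord3 (j : 'I_3) : j = inord 0 \/ j = inord 1 \/ j = inord 2.
Proof.
case: j => [[|[|[|m]]] hm]; [left|right;left|right;right|by []]; by apply/val_inj; rewrite /= inordK.
Qed.

Section Tri.
Variables (n F : nat) (side : 'I_F -> 'I_3 -> 'I_n).
Hypothesis Htwo : two_sided side.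

Lemma w2 (w : {ffun 'I_F * 'I_3 -> int}) f j :
  w (f, j) * 2 = side_weight w f j + side_weight w f (ordS j)
                 - side_weight w f (ordS (ordS j)).
Proof.
rewrite /side_weight.
by case: (ord3 j) => [->|[->|->]]; rewrite ?(S0, S1, S2, P0, P1, P2); ring.
Qed.

Lemma edge_weight_side w : is_weight_system side w ->
  forall f j, edge_weight side w (side f j) = side_weight w f j.
Proof.
move=> Hw f j; rewrite /edge_weight; case: pickP => [[f' j'] /eqP h|/(_ (f, j))].
  by apply: Hw.
by rewrite eqxx.
Qed.

Lemma side_ex (i : 'I_n) : exists p : 'I_F * 'I_3, side p.1 p.2 = i.
Proof.
have := Htwo i; case: (set_0Vmem [set p : 'I_F * 'I_3 | side p.1 p.2 == i]) => [->|[p]].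
  by rewrite cards0.
by rewrite inE => /eqP h _; exists p.
Qed.

Lemma wv_bal w : is_weight_system side w -> balanced side (weight_vector side w).
Proof.
move=> Hw f; rewrite !mxE !edge_weight_side // /side_weight.
rewrite ?(S0, S1, S2, P0, P1, P2).
have -> : w (f, inord 0) + w (f, inord 2) + (w (f, inord 1) + w (f, inord 0)) +
   (w (f, inord 2) + w (f, inord 1)) = 2 * (w (f, inord 0) + w (f, inord 1) + w (f, inord 2)).
  ring.
exact: dvdz_mulr.
Qed.

Lemma wv_inj w w' : is_weight_system side w -> is_weight_system side w' ->
  weight_vector side w = weight_vector side w' -> w = w'.
Proof.
move=> Hw Hw' E.
have sw : forall f j, side_weight w f j = side_weight w' f j.
  move=> f j; rewrite -!edge_weight_side //.
  by have := congr1 (fun v : 'rV[int]_n => v ord0 (side f j)) E; rewrite /= !mxE.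
apply/ffunP => -[f j]; apply: (@mulIf _ 2) => //.
by rewrite !w2 !sw.
Qed.

Definition mkw (k : 'rV[int]_n) : {ffun 'I_F * 'I_3 -> int} :=
  [ffun p => ((k ord0 (side p.1 p.2) + k ord0 (side p.1 (ordS p.2))
               - k ord0 (side p.1 (ordS (ordS p.2)))) %/ 2)%Z].

Lemma mkw_sw k : balanced side k -> forall f j, side_weight (mkw k) f j = k ord0 (side f j).
Proof.
move=> hk f j; apply: (@mulIf _ 2) => //.
have hf := hk f.
set a0 := k ord0 (side f (inord 0)) in hf *.
set a1 := k ord0 (side f (inord 1)) in hf *.
set a2 := k ord0 (side f (inord 2)) in hf *.
have d0 : (2 %| a0 + a1 - a2)%Z.
  have -> : a0 + a1 - a2 = (a0 + a1 + a2) - 2 * a2 by ring.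
  by apply: rpredB => //; apply: dvdz_mulr.
have d1 : (2 %| a1 + a2 - a0)%Z.
  have -> : a1 + a2 - a0 = (a0 + a1 + a2) - 2 * a0 by ring.
  by apply: rpredB => //; apply: dvdz_mulr.
have d2 : (2 %| a2 + a0 - a1)%Z.
  have -> : a2 + a0 - a1 = (a0 + a1 + a2) - 2 * a1 by ring.
  by apply: rpredB => //; apply: dvdz_mulr.
rewrite /side_weight !ffunE /= mulrDl.
case: (ord3 j) => [->|[->|->]]; rewrite ?(S0, S1, S2, P0, P1, P2) -/a0 -/a1 -/a2 !divzK //; ring.
Qed.

Lemma mkw_ws k : balanced side k -> is_weight_system side (mkw k).
Proof. by move=> hk f f' j j' e; rewrite !mkw_sw // e. Qed.

Lemma wv_mkw k : balanced side k -> weight_vector side (mkw k) = k.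
Proof.
move=> hk; apply/rowP => i; rewrite mxE.
have [[f j] /= <-] := side_ex i.
rewrite edge_weight_side; last exact: mkw_ws. have E : (0 : 'I_1) = ord0 by apply/val_inj.
by rewrite E; apply: mkw_sw.
Qed.
End Tri.

Lemma bal_supp n F (side : 'I_F -> 'I_3 -> 'I_n) (x : QT n) m :
  Bal side x -> m \in msupp x -> balanced side m.
Proof.
move=> hx hm; case: (classic (balanced side m)) => // hb.
by move: hm; rewrite -mcoeff_neq0 hx ?eqxx.
Qed.

Theorem lemma3p1 (n F : nat) (side : 'I_F -> 'I_3 -> 'I_n)
  (Htwo : two_sided side) (Hconn : tri_connected side) (Hn : (0 < n)%N)
  (omega : CC) (Homega : omega != 0) :
  (* each Z_alpha lies in Z^omega(lambda) *)
  (forall w, is_weight_system side w -> balanced_CF side omega (Z_alpha side omega w))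
  /\
  (* linear independence of the family (Z_alpha)_alpha *)
  (forall (s : seq {ffun 'I_F * 'I_3 -> int}) (c : {ffun 'I_F * 'I_3 -> int} -> CC),
     uniq s -> (forall w, w \in s -> is_weight_system side w) ->
     \sum_(w <- s) c w *: Z_alpha side omega w = 0 ->
     forall w, w \in s -> c w = 0)
  /\
  (* the family spans Z^omega(lambda) *)
  (forall x : QT n, balanced_CF side omega x ->
     exists (s : seq {ffun 'I_F * 'I_3 -> int}) (c : {ffun 'I_F * 'I_3 -> int} -> CC),
       (forall w, w \in s -> is_weight_system side w) /\
       x = \sum_(w <- s) c w *: Z_alpha side omega w).
Proof.
split; [|split].
- move=> w hw; rewrite /Z_alpha /weyl; apply: gen_scale; apply: gen_mono.
  exact: wv_bal.
- move=> s c us hs hsum w0 hw0.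
  have := congr1 (mcoeff (weight_vector side w0)) hsum.
  rewrite raddf_sum mcoeff0 (bigD1_seq w0) // big_seq_cond big1 ?addr0.
    have [wc0 E] := weylE (sigma side) Homega (weight_vector side w0).
    move=> /= H; move: H; rewrite mcoeffZ /Z_alpha E mcoeffZ mcoeffU eqxx mulr1n.
    rewrite addr0 mulr1 => /eqP; rewrite mulf_eq0 (negbTE wc0) orbF => /eqP. done.
  move=> w /andP [hw hne].
  have [wc0 E] := weylE (sigma side) Homega (weight_vector side w).
  rewrite [LHS]/= mcoeffZ /Z_alpha E mcoeffZ mcoeffU.
  case: eqP => [e|]; last by rewrite mulr0n !mulr0.
  by move: hne; rewrite (wv_inj (hs w hw) (hs w0 hw0) e) eqxx.
- move=> x hx; have hB := gen_Bal Homega hx.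
  exists [seq mkw side m | m <- msupp x].
  exists (fun w => x@_(weight_vector side w) / wc (sigma side) omega (weight_vector side w)).
  split.
    move=> w /mapP [m hm ->]; apply: mkw_ws; exact: bal_supp hB hm.
  rewrite big_map {1}(monalgE x); apply: eq_big_seq => m hm.
  have bm := bal_supp hB hm.
  have [wc0 E] := weylE (sigma side) Homega m.
  rewrite /Z_alpha (wv_mkw Htwo bm) E scalerA (divfK wc0); symmetry; exact: scaleU.
Qed.
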